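(* Fix a state $x^\circ\in\mathsf{X}$ and let $\tau_{x^\circ}=\min\{t\ge1: X(t)=x^\circ\}$. Suppose the relative value function $h^*$ admits the stochastic shortest path (SSP) representation \[ h^*(x)=\min_{U}\mathsf{E}_x\Bigl[\sum_{t=0}^{\tau_{x^\circ}-1}\bigl(c(X(t),U(t))-\eta^*\bigr)\Bigr], \] with the minimum attained by an optimal stationary policy $\phi^*$ that is $(c,h^* )$-myopic. Let $h\colon\mathsf{X}\to\mathbb{R}$, let $\eta\in\mathbb{R}_+$, let $\mathcal{E}_B$ be the Bellman error of $h$ and $c^h(x,u)=c(x,u)-\mathcal{E}_B(x)+\eta$ the perturbed cost, and suppose $h$ admits the SSP representation \[ h(x)=\min_{U}\mathsf{E}_x\Bigl[\sum_{t=0}^{\tau_{x^\circ}-1}\bigl(c^h(X(t),U(t))-\eta\bigr)\Bigr], \] where the minimizing policy is the $(c^h,h)$-myopic policy $\phi^h$ (equivalently the $(c,h)$-myopic policy). Then the direct error $\mathcal{E}_d(x)=h^*(x)-h(x)$ satisfies, for each $x\in\mathsf{X}$, \[ \mathsf{E}^{\phi^*}_x\Bigl[\sum_{t=0}^{\tau_{x^\circ}-1}\bigl(\mathcal{E}_B(X(t))-\eta^*\bigr)\Bigr]\le \mathcal{E}_d(x)\le \mathsf{E}^{\phi^h}_x\Bigl[\sum_{t=0}^{\tau_{x^\circ}-1}\bigl(\mathcal{E}_B(X(t))-\eta^*\bigr)\Bigr], \] where $\mathsf{E}^\phi_x$ denotes expectation for the controlled chain started at $x$ under the stationary policy $\p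hi$.
   Context: MDP model: state space $\mathsf{X}\subseteq\mathbb{R}^\ell$, action space $\mathsf{U}\subseteq\mathbb{R}^{\ell_u}$, feasible action sets $\mathsf{U}(x)$, i.i.d. disturbance $W$ on $\mathbb{R}^w$, dynamics $X(t+1)=X(t)+f(X(t),U(t),W(t+1))$. Generator $\mathcal{D}_u h(x)=\mathsf{E}[h(x+f(x,u,W(1)))]-h(x)$. Cost $c\colon\mathsf{X}\times\mathsf{U}\to\mathbb{R}_+$. The average cost of an input sequence $U$ from $x$ is $\limsup_{n\to\infty}\frac1n\sum_{t=0}^{n-1}\mathsf{E}_x[c(X(t),U(t))]$; $\eta^*$ denotes its infimum over all input sequences, assumed independent of $x$. The relative value function $h^*$ and $\eta^*$ satisfy the average cost optimality equation $\min_{u\in\mathsf{U}(x)}(c(x,u)+\mathcal{D}_u h^*(x))=\eta^*$. For a function $g$, a $(c,g)$-myopic policy is any $\phi^g(x)\in\arg\min_{u\in\mathsf{U}(x)}(c(x,u)+\mathcal{D}_u g(x))$. For a function $h$, its Bellman error is $\mathcal{E}_B(x)=\min_{u\in\mathsf{U}(x)}(c(x,u)+\mathcal{D}_u h(x))$. *)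

(* Defs.v *)
From HB Require Import structures.
From mathcomp Require Import all_boot all_order all_algebra.
From mathcomp Require Import all_classical all_reals all_analysis.
From mathcomp Require Import measurable_realfun.
Set Implicit Arguments. Unset Strict Implicit. Unset Printing Implicit Defensive.
Import Order.TTheory GRing.Theory Num.Theory.
Local Open Scope classical_set_scope.
Local Open Scope ring_scope.

(* Vectors of R^n are 'rV[R]_n; to speak of (Borel) measurability we view
   them as n-tuples of reals (product = Borel sigma-algebra on R^n). *)
Definition rv2t (R : realType) (n : nat) (v : 'rV[R]_n) : n.-tuple R :=
  [tuple v ord0 i | i < n].

Section MDP.
Context {R : realType} {l lu w : nat} {d : measure_display}
        {Omega : measurableType d} (P : probability Omega R).
(* disturbance sequence W(1), W(2), ... (W 0 is unused) *)
Variable W : nat -> Omega -> w.-tuple R.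
Variable f : 'rV[R]_l -> 'rV[R]_lu -> w.-tuple R -> 'rV[R]_l.

Definition iid_disturbance : Prop :=
  [/\ (forall t, (0 < t)%N -> measurable_fun setT (W t)),
      (forall s t (A : set (w.-tuple R)), (0 < s)%N -> (0 < t)%N ->
         measurable A -> P (W s @^-1` A) = P (W t @^-1` A)) &
      (forall (s : seq nat) (A : nat -> set (w.-tuple R)),
         uniq s -> all (fun t => 0 < t)%N s -> (forall t, measurable (A t)) ->
         P (\bigcap_(t in [set` s]) (W t @^-1` A t)) =
         (\prod_(t <- s) P (W t @^-1` A t))%E)].

Fixpoint state (x : 'rV[R]_l) (U : nat -> Omega -> 'rV[R]_lu) (t : nat)
  (om : Omega) : 'rV[R]_l :=
  match t with
  | 0 => x
  | t'.+1 => state x U t' om + f (state x U t' om) (U t' om) (W t'.+1 om)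
  end.

Fixpoint spstate (phi : 'rV[R]_l -> 'rV[R]_lu) (x : 'rV[R]_l) (t : nat)
  (om : Omega) : 'rV[R]_l :=
  match t with
  | 0 => x
  | t'.+1 => spstate phi x t' om
             + f (spstate phi x t' om) (phi (spstate phi x t' om)) (W t'.+1 om)
  end.

Definition spinput (phi : 'rV[R]_l -> 'rV[R]_lu) (x : 'rV[R]_l) :
  nat -> Omega -> 'rV[R]_lu := fun t om => phi (spstate phi x t om).

(* admissible input sequences from x: feasible, measurable and
   non-anticipative (U(t) depends only on W(1),...,W(t)). *)
Definition admissible (Ufeas : 'rV[R]_l -> set 'rV[R]_lu) (x : 'rV[R]_l)
  (U : nat -> Omega -> 'rV[R]_lu) : Prop :=
  [/\ forall t om, Ufeas (state x U t om) (U t om),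
      forall t, measurable_fun setT (fun om => rv2t (U t om)) &
      forall t om om', (forall s, (0 < s <= t)%N -> W s om = W s om') ->
        U t om = U t om'].

Definition avg_cost (c : 'rV[R]_l -> 'rV[R]_lu -> R) (x : 'rV[R]_l)
  (U : nat -> Omega -> 'rV[R]_lu) : \bar R :=
  limn_esup (fun n => ((n%:R)^-1)%:E *
    \sum_(t < n) \int[P]_om (c (state x U t om) (U t om))%:E)%E.

Definition gen (h : 'rV[R]_l -> R) (u : 'rV[R]_lu) (x : 'rV[R]_l) : \bar R :=
  (\int[P]_om (h (x + f x u (W 1 om)))%:E - (h x)%:E)%E.

Definition is_min_over (Ufeas : 'rV[R]_l -> set 'rV[R]_lu) (x : 'rV[R]_l)
  (F : 'rV[R]_lu -> \bar R) (m : \bar R) : Prop :=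
  (exists2 u, Ufeas x u & F u = m) /\ (forall u, Ufeas x u -> (m <= F u)%E).

Definition myopic (Xs : set 'rV[R]_l) (Ufeas : 'rV[R]_l -> set 'rV[R]_lu)
  (c : 'rV[R]_l -> 'rV[R]_lu -> R) (g : 'rV[R]_l -> R)
  (phi : 'rV[R]_l -> 'rV[R]_lu) : Prop :=
  forall x, Xs x -> Ufeas x (phi x) /\
    forall u, Ufeas x u -> ((c x (phi x))%:E + gen g (phi x) x <=
                            (c x u)%:E + gen g u x)%E.

Definition hitting_time (xo : 'rV[R]_l) (X : nat -> 'rV[R]_l) : option nat :=
  match pselect (exists n, (0 < n)%N && (X n == xo)) with
  | left e => Some (ex_minn e)
  | right _ => None
  end.

(* sum_{t=0}^{tau-1} G t along a path X; +oo when tau = +oo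
   (standard SSP convention: improper behaviour has infinite cost). *)
Definition sum_to_hit (xo : 'rV[R]_l) (X : nat -> 'rV[R]_l) (G : nat -> R)
  : \bar R :=
  match hitting_time xo X with
  | Some n => (\sum_(t < n) G t)%:E
  | None => +oo%E
  end.

Definition ssp_integrand (xo : 'rV[R]_l) (g : 'rV[R]_l -> 'rV[R]_lu -> R)
  (x : 'rV[R]_l) (U : nat -> Omega -> 'rV[R]_lu) (om : Omega) : \bar R :=
  sum_to_hit xo (fun t => state x U t om) (fun t => g (state x U t om) (U t om)).

Definition ssp_cost (xo : 'rV[R]_l) (g : 'rV[R]_l -> 'rV[R]_lu -> R)
  (x : 'rV[R]_l) (U : nat -> Omega -> 'rV[R]_lu) : \bar R :=
  \int[P]_om ssp_integrand xo g x U om.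

Definition ssp_representation (Ufeas : 'rV[R]_l -> set 'rV[R]_lu)
  (xo : 'rV[R]_l) (g : 'rV[R]_l -> 'rV[R]_lu -> R) (hv : 'rV[R]_l -> R)
  (phi : 'rV[R]_l -> 'rV[R]_lu) (x : 'rV[R]_l) : Prop :=
  [/\ admissible Ufeas x (spinput phi x),
      ssp_cost xo g x (spinput phi x) = (hv x)%:E &
      forall U, admissible Ufeas x U -> ((hv x)%:E <= ssp_cost xo g x U)%E].

End MDP.

(* Main.v *)
Require Import Defs.
From HB Require Import structures.
From mathcomp Require Import all_boot all_order all_algebra.
From mathcomp Require Import all_classical all_reals all_analysis.
From mathcomp Require Import measurable_realfun.
From mathcomp Require Import lra.
Import Order.TTheory GRing.Theory Num.Theory.
Local Open Scope classical_set_scope.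
Local Open Scope ring_scope.

Section L.
Context {R : realType}.
Local Open Scope ereal_scope.

Definition rel3 (a b c : \bar R) : Prop :=
  (a = +oo /\ b = +oo /\ c = +oo) \/
  exists x y z : R, [/\ a = x%:E, b = y%:E, c = z%:E & x = (y + z)%R].

Lemma pE (x : R) : maxe x%:E 0 = (Num.max x 0)%:E.
Proof. by rewrite !maxEle -[0 : \bar R]/(0%:E) lee_fin; case: ifP. Qed.
Lemma nE (x : R) : maxe (- x%:E) 0 = (Num.max (- x) 0)%:E.
Proof. by rewrite -EFinN pE. Qed.
Lemma pyE : maxe (+oo : \bar R) 0 = +oo. Proof. by rewrite maxEle. Qed.
Lemma nyE : maxe (- (+oo : \bar R)) 0 = 0. Proof. by rewrite maxEle /= leNye. Qed.

Ltac mx := rewrite ?maxEle; repeat case: ifP => ?; lra.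

Lemma rel3_ineqs {a b c : \bar R} : rel3 a b c ->
  [/\ maxe a 0 <= maxe b 0 + maxe c 0,
      maxe (-c) 0 <= maxe (-a) 0 + maxe b 0,
      maxe c 0 <= maxe a 0 + maxe (-b) 0,
      maxe b 0 <= maxe a 0 + maxe (-c) 0 &
      maxe a 0 + maxe (-b) 0 + maxe (-c) 0 = maxe (-a) 0 + maxe b 0 + maxe c 0].
Proof.
case=> [[-> [-> ->]]|[x [y [z [-> -> -> e]]]]].
  by rewrite pyE nyE !adde0 !add0e leey.
rewrite !pE -!EFinD !lee_fin; split; try (apply/eqP; rewrite eqe); mx.
Qed.
End L.

Section T.
Context {R : realType}.
Local Open Scope ereal_scope.
Lemma arith_upper {pA nA pB nB pC nC : \bar R} {b1 b2 : R} :
  0 <= pA -> 0 <= nA -> 0 <= pC -> 0 <= nC ->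
  pB = b1%:E -> nB = b2%:E ->
  pA <= pB + pC -> nC <= nA + pB -> pA + nB + nC = nA + pB + pC ->
  (pA - nA) - (pB - nB) <= pC - nC.
Proof.
move=> pA0 nA0 pC0 nC0 -> -> i1 i2 e.
case: nA nA0 i2 e => [a2||] // _ i2 e; try by rewrite addeNy addNye leNye.
case: nC nC0 i2 e => [c2||] // _ i2 e; try by move: i2; rewrite -EFinD leye_eq.
case: pC pC0 i1 e => [c1||] // _ i1 e; try (
  by rewrite -EFinB addye // leey).
case: pA pA0 i1 e => [a1||] // _ i1 e; try by move: i1; rewrite -EFinD leye_eq.
move: i1 i2 e; rewrite -?EFinD -?EFinB ?lee_fin => i1 i2 /eqP; rewrite eqe => /eqP e.
lra.
Qed.

Lemma arith_lower {pA nA pB nB pC nC : \bar R} {a1 a2 : R} :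
  0 <= pB -> 0 <= nB -> 0 <= pC -> 0 <= nC ->
  pA = a1%:E -> nA = a2%:E ->
  pC <= pA + nB -> pB <= pA + nC -> pA + nB + nC = nA + pB + pC ->
  pC - nC <= (pA - nA) - (pB - nB).
Proof.
move=> pB0 nB0 pC0 nC0 -> -> i3 i4 e.
case: nC nC0 i4 e => [c2||] // _ i4 e; try by rewrite addeNy leNye.
case: pB pB0 i4 e => [b1||] // _ i4 e; try by move: i4; rewrite -EFinD leye_eq.
case: nB nB0 i3 e => [b2||] // _ i3 e; try by rewrite -EFinB /= addey // leey.
case: pC pC0 i3 e => [c1||] // _ i3 e; try by move: i3; rewrite -EFinD leye_eq.
move: i3 i4 e; rewrite -?EFinD -?EFinB ?lee_fin => i3 i4 /eqP; rewrite eqe => /eqP e.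
lra.
Qed.
Lemma fin_sub {p n : \bar R} {b : R} : 0 <= p -> 0 <= n -> p - n = b%:E ->
  exists b1 b2, p = b1%:E /\ n = b2%:E.
Proof.
case: p => [x||] //; case: n => [y||] // _ _ _; by exists x, y.
Qed.
End T.

Section I.
Context {R : realType} {d : measure_display} {T : measurableType d}
  (mu : {measure set T -> \bar R}).
Local Open Scope ereal_scope.

Lemma le3 {F G H : T -> \bar R} :
  measurable_fun setT F -> measurable_fun setT G -> measurable_fun setT H ->
  (forall x, 0 <= F x) -> (forall x, 0 <= G x) -> (forall x, 0 <= H x) ->
  (forall x, F x <= G x + H x) ->
  \int[mu]_x F x <= \int[mu]_x G x + \int[mu]_x H x.
Proof.
move=> mF mG mH F0 G0 H0 FGH.
rewrite -ge0_integralD //; apply: ge0_le_integral => //.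
 all: try (by move=> x xT; apply: adde_ge0).
 all: try exact: emeasurable_funD.
Qed.

Lemma eq3 {F1 F2 F3 G1 G2 G3 : T -> \bar R} :
  measurable_fun setT F1 -> measurable_fun setT F2 -> measurable_fun setT F3 ->
  measurable_fun setT G1 -> measurable_fun setT G2 -> measurable_fun setT G3 ->
  (forall x, 0 <= F1 x) -> (forall x, 0 <= F2 x) -> (forall x, 0 <= F3 x) ->
  (forall x, 0 <= G1 x) -> (forall x, 0 <= G2 x) -> (forall x, 0 <= G3 x) ->
  (forall x, F1 x + F2 x + F3 x = G1 x + G2 x + G3 x) ->
  \int[mu]_x F1 x + \int[mu]_x F2 x + \int[mu]_x F3 x =
  \int[mu]_x G1 x + \int[mu]_x G2 x + \int[mu]_x G3 x.
Proof.
move=> m1 m2 m3 n1 n2 n3 p1 p2 p3 q1 q2 q3 e.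
have sum3 (K1 K2 K3 : T -> \bar R) : measurable_fun setT K1 ->
  measurable_fun setT K2 -> measurable_fun setT K3 ->
  (forall x, 0 <= K1 x) -> (forall x, 0 <= K2 x) -> (forall x, 0 <= K3 x) ->
  \int[mu]_x (K1 x + K2 x + K3 x) =
  \int[mu]_x K1 x + \int[mu]_x K2 x + \int[mu]_x K3 x.
  move=> k1 k2 k3 l1 l2 l3.
  rewrite ge0_integralD //.
  all: try (by move=> x xT; apply: adde_ge0).
  all: try exact: emeasurable_funD.
  by rewrite ge0_integralD.
rewrite -sum3 // -sum3 //.
by apply: eq_integral => x xT; rewrite e.
Qed.

Lemma fin_le (X : \bar R) (y : R) : 0 <= X -> X <= y%:E -> X = (fine X)%:E.
Proof. by case: X. Qed.

Variables (A B C : T -> \bar R).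
Hypotheses (mA : measurable_fun setT A) (mB : measurable_fun setT B)
  (mC : measurable_fun setT C) (r : forall x, rel3 (A x) (B x) (C x)).

Let pA := \int[mu]_x A^\+ x.
Let nA := \int[mu]_x A^\- x.
Let pB := \int[mu]_x B^\+ x.
Let nB := \int[mu]_x B^\- x.
Let pC := \int[mu]_x C^\+ x.
Let nC := \int[mu]_x C^\- x.

Let mp {F : T -> \bar R} : measurable_fun setT F -> measurable_fun setT F^\+.
Proof. exact: measurable_funepos. Qed.
Let mn {F : T -> \bar R} : measurable_fun setT F -> measurable_fun setT F^\-.
Proof. exact: measurable_funeneg. Qed.
Let g0 (F : T -> \bar R) x : 0 <= F^\+ x. Proof. exact: funepos_ge0. Qed.
Let n0 (F : T -> \bar R) x : 0 <= F^\- x. Proof. exact: funeneg_ge0. Qed.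

Let i1 : pA <= pB + pC.
Proof. rewrite /pA /nA /pB /nB /pC /nC; apply: (le3 (mp mA) (mp mB) (mp mC) (g0 A) (g0 B) (g0 C)) => x.
rewrite !funeposE; by case: (rel3_ineqs (r x)). Qed.
Let i2 : nC <= nA + pB.
Proof. rewrite /pA /nA /pB /nB /pC /nC; apply: (le3 (mn mC) (mn mA) (mp mB) (n0 C) (n0 A) (g0 B)) => x.
rewrite !funeposE !funenegE; by case: (rel3_ineqs (r x)). Qed.
Let i3 : pC <= pA + nB.
Proof. rewrite /pA /nA /pB /nB /pC /nC; apply: (le3 (mp mC) (mp mA) (mn mB) (g0 C) (g0 A) (n0 B)) => x.
rewrite !funeposE !funenegE; by case: (rel3_ineqs (r x)). Qed.
Let i4 : pB <= pA + nC.
Proof. rewrite /pA /nA /pB /nB /pC /nC; apply: (le3 (mp mB) (mp mA) (mn mC) (g0 B) (g0 A) (n0 C)) => x.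
rewrite !funeposE !funenegE; by case: (rel3_ineqs (r x)). Qed.
Let e1 : pA + nB + nC = nA + pB + pC.
Proof. rewrite /pA /nA /pB /nB /pC /nC; apply: (eq3 (mp mA) (mn mB) (mn mC) (mn mA) (mp mB) (mp mC)
  (g0 A) (n0 B) (n0 C) (n0 A) (g0 B) (g0 C)) => x.
rewrite !funeposE !funenegE; by case: (rel3_ineqs (r x)). Qed.

Let pA0 : 0 <= pA. Proof. exact: integral_ge0. Qed.
Let nA0 : 0 <= nA. Proof. exact: integral_ge0. Qed.
Let pB0 : 0 <= pB. Proof. exact: integral_ge0. Qed.
Let nB0 : 0 <= nB. Proof. exact: integral_ge0. Qed.
Let pC0 : 0 <= pC. Proof. exact: integral_ge0. Qed.
Let nC0 : 0 <= nC. Proof. exact: integral_ge0. Qed.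

Lemma int_upper (b : R) : \int[mu]_x B x = b%:E ->
  \int[mu]_x A x - \int[mu]_x B x <= \int[mu]_x C x.
Proof.
rewrite [\int[mu]_x A x]integralE [\int[mu]_x B x]integralE [\int[mu]_x C x]integralE -/pA -/nA -/pB -/nB -/pC -/nC => hB.
have [b1 [b2 [eb1 eb2]]] := fin_sub pB0 nB0 hB.
exact: (arith_upper pA0 nA0 pC0 nC0 eb1 eb2 i1 i2 e1).
Qed.

Lemma int_lower (a : R) : \int[mu]_x A x = a%:E ->
  \int[mu]_x C x <= \int[mu]_x A x - \int[mu]_x B x.
Proof.
rewrite [\int[mu]_x A x]integralE [\int[mu]_x B x]integralE [\int[mu]_x C x]integralE -/pA -/nA -/pB -/nB -/pC -/nC => hA.
have [a1 [a2 [ea1 ea2]]] := fin_sub pA0 nA0 hA.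
exact: (arith_lower pB0 nB0 pC0 nC0 ea1 ea2 i3 i4 e1).
Qed.
End I.

Theorem proposition2
  (R : realType) (l lu w : nat) (d : measure_display)
  (Omega : measurableType d) (P : probability Omega R)
  (W : nat -> Omega -> w.-tuple R)
  (f : 'rV[R]_l -> 'rV[R]_lu -> w.-tuple R -> 'rV[R]_l)
  (Xs : set 'rV[R]_l) (Us : set 'rV[R]_lu) (Ufeas : 'rV[R]_l -> set 'rV[R]_lu)
  (c : 'rV[R]_l -> 'rV[R]_lu -> R)
  (etas : R) (hs : 'rV[R]_l -> R) (phis : 'rV[R]_l -> 'rV[R]_lu)
  (xo : 'rV[R]_l)
  (h : 'rV[R]_l -> R) (eta : R) (EB : 'rV[R]_l -> R)
  (phih : 'rV[R]_l -> 'rV[R]_lu) :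
  (* standing assumptions on the MDP model *)
  iid_disturbance P W ->
  (forall x, Ufeas x `<=` Us) ->
  (forall x u t om, Xs x -> Ufeas x u -> Xs (x + f x u (W t om))) ->
  (forall x u, 0 <= c x u) ->
  (* eta* is the optimal average cost, independent of the initial state *)
  (forall x, Xs x ->
     etas%:E = ereal_inf [set avg_cost P W f c x U | U in admissible W f Ufeas x]) ->
  (* average cost optimality equation for (h*, eta* ) *)
  (forall x, Xs x ->
     is_min_over Ufeas x (fun u => ((c x u)%:E + gen P W f hs u x)%E) etas%:E) ->
  Xs xo ->
  (* SSP representation of h*, attained by the (c,h* )-myopic policy phi* *)
  myopic P W f Xs Ufeas c hs phis ->
  (forall x, Xs x -> ssp_representation P W f Ufeas xo
                       (fun y u => c y u - etas) hs phis x) ->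
  (* h, eta, its Bellman error EB and the perturbed cost c^h *)
  0 <= eta ->
  (forall x, Xs x ->
     is_min_over Ufeas x (fun u => ((c x u)%:E + gen P W f h u x)%E) (EB x)%:E) ->
  (* SSP representation of h, attained by the (c^h,h)-myopic policy phi^h *)
  myopic P W f Xs Ufeas (fun y u => c y u - EB y + eta) h phih ->
  (forall x, Xs x -> ssp_representation P W f Ufeas xo
                       (fun y u => (c y u - EB y + eta) - eta) h phih x) ->
  (* the expectations involved are expectations of random variables *)
  (forall x (phi : 'rV[R]_l -> 'rV[R]_lu) (g : 'rV[R]_l -> 'rV[R]_lu -> R),
     Xs x -> (phi = phis \/ phi = phih) ->
     [\/ g = (fun y u => c y u - etas),
         g = (fun y u => (c y u - EB y + eta) - eta) |
         g = (fun y _ => EB y - etas)] ->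
     measurable_fun setT (ssp_integrand W f xo g x (spinput W f phi x))) ->
  (* conclusion: bounds on the direct error E_d = h* - h *)
  forall x, Xs x ->
    (ssp_cost P W f xo (fun y _ => (EB y - etas)%R) x (spinput W f phis x)
       <= (hs x - h x)%:E
       <= ssp_cost P W f xo (fun y _ => (EB y - etas)%R) x (spinput W f phih x))%E.
Proof.
move=> iid Ufs Xinv c0 etaopt acoe Xso mys ssps eta0 EBmin myh ssph meas x Xx.
have [adm_s cost_s min_s] := ssps x Xx.
have [adm_h cost_h min_h] := ssph x Xx.
have rl : forall phi om,
  rel3 (ssp_integrand W f xo (fun y u => c y u - etas) x (spinput W f phi x) om)
       (ssp_integrand W f xo (fun y u => (c y u - EB y + eta) - eta) x (spinput W f phi x) om)
       (ssp_integrand W f xo (fun y _ => EB y - etas) x (spinput W f phi x) om).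
  move=> phi om; rewrite /ssp_integrand /sum_to_hit.
  case: hitting_time => [n|]; last by left.
  right; do 3 eexists; split; [reflexivity|reflexivity|reflexivity|].
  rewrite -big_split; apply: eq_bigr => i _ /=; lra.
have mS phi : (phi = phis \/ phi = phih) -> measurable_fun setT
    (ssp_integrand W f xo (fun y u => c y u - etas) x (spinput W f phi x)).
  by move=> hp; apply: meas => //; apply: Or31.
have mH phi : (phi = phis \/ phi = phih) -> measurable_fun setT
    (ssp_integrand W f xo (fun y u => (c y u - EB y + eta) - eta) x (spinput W f phi x)).
  by move=> hp; apply: meas => //; apply: Or32.
have mE phi : (phi = phis \/ phi = phih) -> measurable_fun setT
    (ssp_integrand W f xo (fun y _ => EB y - etas) x (spinput W f phi x)).
  by move=> hp; apply: meas => //; apply: Or33.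
apply/andP; split.
- have := @int_lower _ _ _ P _ _ _ (mS phis (or_introl erefl))
    (mH phis (or_introl erefl)) (mE phis (or_introl erefl)) (rl phis) (hs x) cost_s.
  move/le_trans; apply.
  rewrite /ssp_cost in cost_s *; rewrite cost_s EFinB.
  apply: leeB => //; exact: (min_h _ adm_s).
- have := @int_upper _ _ _ P _ _ _ (mS phih (or_intror erefl))
    (mH phih (or_intror erefl)) (mE phih (or_intror erefl)) (rl phih) (h x) cost_h.
  apply: le_trans.
  rewrite /ssp_cost in cost_h *; rewrite cost_h EFinB.
  apply: leeB => //; exact: (min_s _ adm_h).
Qed.
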